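(* Assume $f$ is in Case 4. For every $0<l<\alpha$ there exist positive numbers $r_1,r_2$, which can be taken arbitrarily small, such that $f(U^{l,+}_{r_1,r_2})\subset U^{l,+}_{r_1,r_2}$, where $U^{l,+}_{r_1,r_2}=\{|z|<r_1,\ |w|<r_2|z|^l\}$.
   Context: Let $f(z,w)=(p(z),q(z,w))$ be a holomorphic skew product defined near the origin of $\mathbb{C}^2$ with $p(z)=az^{\delta}+O(z^{\delta+1})$, $a\neq0$, $\delta\ge2$, and $q(z,w)=\sum_{i,j\ge0}b_{ij}z^iw^j$ with $b_{00}=b_{01}=0$. The Newton polygon $N(q)$ is the convex hull of $\bigcup_{b_{ij}\ne0}\{(x,y):x\ge i,\ y\ge j\}$, with vertices $(n_1,m_1),\dots,(n_s,m_s)$, $n_1<\dots<n_s$, $m_1>\dots>m_s$. For $1\le k\le s-1$, $T_k$ is the $y$-intercept of the line through $(n_k,m_k)$ and $(n_{k+1},m_{k+1})$. Case 4 means $s>2$ and $T_k\le\delta\le T_{k-1}$ for some $2\le k\le s-1$; then set $(\gamma,d)=(n_k,m_k)$ (so $\gamma>0$, $\delta>d\ge1$) and $\alpha=\gamma/(\delta-d)$. *)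

(* Defs.v *)
From Stdlib Require Import Reals.
From Coquelicot Require Import Coquelicot.
Open Scope R_scope.

Definition CSeries (u : nat -> C) : C :=
  (Series (fun n => Re (u n)), Series (fun n => Im (u n))).

Definition pval (a : nat -> C) (z : C) : C :=
  CSeries (fun n => (a n * Cpow z n)%C).

Definition qval (b : nat -> nat -> C) (z w : C) : C :=
  CSeries (fun i => CSeries (fun j => (b i j * Cpow z i * Cpow w j)%C)).

(* p is holomorphic near 0: its power series converges absolutely on some disk *)
Definition conv1 (a : nat -> C) : Prop :=
  exists rho, 0 < rho /\ ex_series (fun n => Cmod (a n) * rho ^ n).

(* q is holomorphic near (0,0): its double power series converges absolutely
   on some polydisk *)
Definition conv2 (b : nat -> nat -> C) : Prop :=
  exists rho, 0 < rho /\
    (forall i, ex_series (fun j => Cmod (b i j) * rho ^ i * rho ^ j)) /\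
    ex_series (fun i => Series (fun j => Cmod (b i j) * rho ^ i * rho ^ j)).

(* Newton polygon N(q): convex hull of the union over b_ij <> 0 of the
   quadrants {(x,y) : x >= i, y >= j}. *)
Definition in_quadrants (b : nat -> nat -> C) (x y : R) : Prop :=
  exists i j : nat, b i j <> 0%C /\ INR i <= x /\ INR j <= y.

Definition newton_polygon (b : nat -> nat -> C) (x y : R) : Prop :=
  exists (n : nat) (lam px py : nat -> R),
    (forall k, (k < n)%nat -> 0 <= lam k /\ in_quadrants b (px k) (py k)) /\
    sum_f_R0 lam (pred n) = 1 /\ (0 < n)%nat /\
    x = sum_f_R0 (fun k => lam k * px k) (pred n) /\
    y = sum_f_R0 (fun k => lam k * py k) (pred n).

Definition is_vertex (b : nat -> nat -> C) (x y : R) : Prop :=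
  newton_polygon b x y /\
  forall x1 y1 x2 y2, newton_polygon b x1 y1 -> newton_polygon b x2 y2 ->
    x = (x1 + x2) / 2 -> y = (y1 + y2) / 2 -> x1 = x2 /\ y1 = y2.

Definition y_intercept (x1 y1 x2 y2 : R) : R :=
  y1 - x1 * (y2 - y1) / (x2 - x1).

(* Case 4 with distinguished vertex (gamma,d) = (n_k, m_k), 2 <= k <= s-1:
   (n_{k-1},m_{k-1}) and (n_{k+1},m_{k+1}) are the vertices immediately to the
   left and to the right of (n_k,m_k) (vertices are ordered by abscissa), and
   T_k <= delta <= T_{k-1}. *)
Definition case4_vertex (b : nat -> nat -> C) (delta gamma d : nat) : Prop :=
  is_vertex b (INR gamma) (INR d) /\
  exists x0 y0 x2 y2 : R,
    is_vertex b x0 y0 /\ x0 < INR gamma /\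
    (forall x y, is_vertex b x y -> ~ (x0 < x < INR gamma)) /\
    is_vertex b x2 y2 /\ INR gamma < x2 /\
    (forall x y, is_vertex b x y -> ~ (INR gamma < x < x2)) /\
    y_intercept (INR gamma) (INR d) x2 y2 <= INR delta /\
    INR delta <= y_intercept x0 y0 (INR gamma) (INR d).

Definition rpow (x l : R) : R := if Req_EM_T x 0 then 0 else Rpower x l.

Definition U_plus (l r1 r2 : R) (z w : C) : Prop :=
  Cmod z < r1 /\ Cmod w < r2 * rpow (Cmod z) l.

(* Main.v *)
Require Import Defs.
From Stdlib Require Import Reals.
From Coquelicot Require Import Coquelicot.
From Stdlib Require Import Lra Lia Psatz List Classical ZArith.
Open Scope R_scope.

Lemma sum_lin2 (f g : nat -> R) c1 c2 N :
  sum_f_R0 (fun k => c1 * f k + c2 * g k) N = c1 * sum_f_R0 f N + c2 * sum_f_R0 g N.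
Proof. induction N; simpl; [ring| rewrite IHN; ring]. Qed.

Lemma sum_scal (f : nat -> R) c N :
  sum_f_R0 (fun k => c * f k) N = c * sum_f_R0 f N.
Proof. induction N; simpl; [ring| rewrite IHN; ring]. Qed.

Lemma sum_ge_c (lam g : nat -> R) c N :
  (forall k, (k <= N)%nat -> c * lam k <= g k) -> c * sum_f_R0 lam N <= sum_f_R0 g N.
Proof.
  induction N; intros H; simpl.
  - apply H; lia.
  - rewrite Rmult_plus_distr_l. apply Rplus_le_compat.
    + apply IHN; intros; apply H; lia.
    + apply H; lia.
Qed.

Lemma sum_nonneg_zero (h : nat -> R) N :
  (forall k, (k <= N)%nat -> 0 <= h k) -> sum_f_R0 h N = 0 ->
  forall k, (k <= N)%nat -> h k = 0.
Proof.
  induction N; intros H HS k Hk; simpl in HS.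
  - assert (k = 0)%nat by lia; subst; auto.
  - assert (0 <= sum_f_R0 h N).
    { replace 0 with (0 * sum_f_R0 (fun _ => 0) N) by ring.
      apply sum_ge_c. intros; rewrite Rmult_0_l; apply H; lia. }
    assert (0 <= h (S N)) by (apply H; lia).
    destruct (Nat.eq_dec k (S N)) as [->|]; [lra|].
    apply IHN; try lra; try lia. intros; apply H; lia.
Qed.

Lemma np_lin (b : nat -> nat -> C) (c a1 a2 : R) : 0 <= a1 -> 0 <= a2 ->
  (forall i j, b i j <> 0%C -> c <= a1 * INR i + a2 * INR j) ->
  forall x y, newton_polygon b x y -> c <= a1 * x + a2 * y.
Proof.
  intros h1 h2 H x y [n [lam [px [py [Hk [Hs [Hn [Hx Hy]]]]]]]].
  subst x y.
  rewrite <- !sum_scal, <- Rmult_1_r at 1. rewrite <- Hs, Rmult_comm.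
  replace (sum_f_R0 (fun k => a1 * (lam k * px k)) (Init.Nat.pred n) +
           sum_f_R0 (fun k => a2 * (lam k * py k)) (Init.Nat.pred n))
   with (sum_f_R0 (fun k => a1 * (lam k * px k) + a2 * (lam k * py k)) (Init.Nat.pred n)).
  2:{ rewrite sum_lin2, !sum_scal. ring. }
  rewrite Rmult_comm. apply sum_ge_c. intros k Hk'.
  destruct (Hk k ltac:(lia)) as [Hl [i [j [Hb [Hi Hj]]]]].
  specialize (H i j Hb).
  assert (a1 * INR i + a2 * INR j <= a1 * px k + a2 * py k).
  { apply Rplus_le_compat; apply Rmult_le_compat_l; auto. }
  assert (c * lam k <= (a1 * px k + a2 * py k) * lam k) by (apply Rmult_le_compat_r; lra).
  lra.
Qed.

Lemma nat_big r : exists N, r < INR N.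
Proof.
  destruct (archimed r) as [H _].
  exists (Z.abs_nat (up r)). rewrite INR_IZR_INZ, Zabs2Nat.id_abs.
  apply Rlt_le_trans with (1 := H). apply IZR_le. lia.
Qed.

Lemma list_min {A : Type} (Rl : A -> A -> Prop) (P : A -> Prop)
  (Htot : forall x y, Rl x y \/ Rl y x)
  (Htr : forall x y z, Rl x y -> Rl y z -> Rl x z) (l : list A) :
  (exists x, In x l /\ P x) -> exists x, In x l /\ P x /\ forall y, In y l -> P y -> Rl x y.
Proof.
  induction l as [|a l IH]; intros [x [Hx Px]]; [destruct Hx|].
  destruct (classic (exists x, In x l /\ P x)) as [Hl|Hl].
  - destruct (IH Hl) as [m [Hm [Pm Hmin]]].
    destruct (classic (P a)) as [Pa|Pa].
    + destruct (Htot m a) as [Hma|Ham].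
      * exists m; split; [right; auto|split; auto].
        intros y [Hy|Hy] Py; [subst y|]; auto.
      * exists a; split; [left; auto|split; auto].
        intros y [Hy|Hy] Py; [subst y; destruct (Htot a a); auto|].
        apply Htr with m; auto.
    + exists m; split; [right; auto|split; auto].
      intros y [Hy|Hy] Py; [subst y; contradiction|auto].
  - destruct Hx as [Hx|Hx]; [subst x|exfalso; apply Hl; eauto].
    exists a; split; [left; auto|split; auto].
    intros y [Hy|Hy] Py; [subst y; destruct (Htot a a); auto|exfalso; apply Hl; eauto].
Qed.

Lemma lexmin (b : nat -> nat -> C) al : 0 < al -> (exists i j, b i j <> 0%C) ->
  exists qi qj, b qi qj <> 0%C /\
   (forall i j, b i j <> 0%C -> INR qi + al*INR qj <= INR i + al*INR j) /\
   (forall i j, b i j <> 0%C -> INR i + al*INR j = INR qi + al*INR qj -> (qi <= i)%nat).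
Proof.
  intros Hal [pi [pj Hp]].
  set (f := fun i j => INR i + al * INR j).
  set (F := f pi pj).
  destruct (nat_big (Rmax F (F/al))) as [N HN].
  assert (HF1 : F < INR N) by (eapply Rle_lt_trans; [apply Rmax_l|exact HN]).
  assert (HF2 : F < al * INR N).
  { assert (F/al < INR N) by (eapply Rle_lt_trans; [apply Rmax_r|exact HN]).
    apply Rmult_lt_compat_l with (r := al) in H; auto.
    replace (al * (F/al)) with F in H by (field; lra). auto. }
  set (Rl := fun x y : nat * nat => f (fst x) (snd x) < f (fst y) (snd y) \/
     (f (fst x) (snd x) = f (fst y) (snd y) /\ (fst x <= fst y)%nat)).
  destruct (list_min Rl (fun x => b (fst x) (snd x) <> 0%C))
    with (l := list_prod (seq 0 (S N)) (seq 0 (S N))) as [[qi qj] [Hin [Hq Hmin]]].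
  - intros [x1 x2] [y1 y2]; unfold Rl; simpl.
    destruct (Rtotal_order (f x1 x2) (f y1 y2)) as [|[|]]; auto.
    destruct (le_ge_dec x1 y1); [left|right]; right; split; auto; lia.
  - intros [x1 x2] [y1 y2] [z1 z2]; unfold Rl; simpl. intros [|[]] [|[]].
    + left; lra. + left; lra. + left; lra. + right; split; [lra|lia].
  - exists (pi, pj); split; auto. apply in_prod_iff; split; apply in_seq.
    + split; [lia|]. destruct (le_lt_dec pi N); [lia|].
      exfalso. assert (INR N < INR pi) by (apply lt_INR; lia).
      unfold F, f in HF1. assert (0 <= al * INR pj) by (apply Rmult_le_pos; [lra|apply pos_INR]). lra.
    + split; [lia|]. destruct (le_lt_dec pj N); [lia|].
      exfalso. assert (INR N < INR pj) by (apply lt_INR; lia).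
      unfold F, f in HF2. assert (0 <= INR pi) by apply pos_INR. nra.
  - simpl in *. exists qi, qj.
    assert (HQP : f qi qj <= F).
    { assert (HP : In (pi,pj) (list_prod (seq 0 (S N)) (seq 0 (S N))) \/ ~ In (pi,pj) (list_prod (seq 0 (S N)) (seq 0 (S N)))) by apply classic.
      destruct HP as [HP|HP].
      - destruct (Hmin _ HP Hp) as [|[]]; unfold F; simpl in *; lra.
      - exfalso; apply HP. apply in_prod_iff; split; apply in_seq.
        + split; [lia|]. destruct (le_lt_dec pi N); [lia|].
          exfalso. assert (INR N < INR pi) by (apply lt_INR; lia).
          unfold F, f in HF1. assert (0 <= al * INR pj) by (apply Rmult_le_pos; [lra|apply pos_INR]). lra.
        + split; [lia|]. destruct (le_lt_dec pj N); [lia|].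
          exfalso. assert (INR N < INR pj) by (apply lt_INR; lia).
          unfold F, f in HF2. assert (0 <= INR pi) by apply pos_INR. nra. }
    assert (Hout : forall i j, ~ In (i,j) (list_prod (seq 0 (S N)) (seq 0 (S N))) -> F < f i j).
    { intros i j Hn. destruct (le_lt_dec i N).
      - destruct (le_lt_dec j N).
        + exfalso; apply Hn. apply in_prod_iff; split; apply in_seq; lia.
        + assert (INR N < INR j) by (apply lt_INR; lia). unfold f.
          assert (0 <= INR i) by apply pos_INR. nra.
      - assert (INR N < INR i) by (apply lt_INR; lia). unfold f.
        assert (0 <= al * INR j) by (apply Rmult_le_pos; [lra|apply pos_INR]). lra. }
    split; auto. split.
    + intros i j Hb. destruct (classic (In (i,j) (list_prod (seq 0 (S N)) (seq 0 (S N))))) as [Hi|Hi].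
      * destruct (Hmin _ Hi Hb) as [|[]]; unfold f in *; simpl in *; lra.
      * specialize (Hout i j Hi). unfold f in *; lra.
    + intros i j Hb He. destruct (classic (In (i,j) (list_prod (seq 0 (S N)) (seq 0 (S N))))) as [Hi|Hi].
      * destruct (Hmin _ Hi Hb) as [|[]]; unfold f in *; simpl in *; [lra|auto].
      * specialize (Hout i j Hi). unfold f in *; lra.
Qed.

Lemma np_eq (b : nat -> nat -> C) al qi qj : 0 < al ->
  (forall i j, b i j <> 0%C -> INR qi + al * INR qj <= INR i + al * INR j) ->
  (forall i j, b i j <> 0%C -> INR i + al * INR j = INR qi + al * INR qj -> (qi <= i)%nat) ->
  forall x y, newton_polygon b x y -> x + al * y = INR qi + al * INR qj -> INR qi <= x.
Proof.
  intros Hal H1 H2 x y [n [lam [px [py [Hk [Hs [Hn [Hx Hy]]]]]]]] He.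
  set (m := INR qi + al * INR qj) in *.
  set (N := Init.Nat.pred n) in *.
  assert (E : forall M, sum_f_R0 (fun k => lam k * (px k + al*py k - m)) M =
     sum_f_R0 (fun k => lam k * px k) M + al * sum_f_R0 (fun k => lam k * py k) M - m * sum_f_R0 lam M)
    by (induction M; simpl; [ring| rewrite IHM; ring]).
  assert (Hq : forall k, (k <= N)%nat -> m <= px k + al * py k).
  { intros k Hk'. destruct (Hk k ltac:(unfold N in Hk'; lia)) as [_ [i [j [Hb [Hi Hj]]]]].
    specialize (H1 i j Hb). fold m in H1. nra. }
  assert (Z := sum_nonneg_zero (fun k => lam k * (px k + al*py k - m)) N).
  assert (Z' : forall k, (k <= N)%nat -> lam k * (px k + al*py k - m) = 0).
  { apply Z.
    - intros k Hk'. destruct (Hk k ltac:(unfold N in Hk'; lia)) as [Hl _].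
      specialize (Hq k Hk'). apply Rmult_le_pos; lra.
    - rewrite E, Hs, <- Hx, <- Hy. lra. }
  assert (G : 0 <= sum_f_R0 (fun k => lam k * (px k - INR qi)) N).
  { replace 0 with (0 * sum_f_R0 (fun _ => 0) N) by ring.
    apply sum_ge_c. intros k Hk'. rewrite Rmult_0_l.
    destruct (Hk k ltac:(unfold N in Hk'; lia)) as [Hl [i [j [Hb [Hi Hj]]]]].
    destruct (Req_dec (lam k) 0) as [->|Hl0]; [lra|].
    specialize (Z' k Hk').
    assert (px k + al * py k = m).
    { apply Rmult_integral in Z'. destruct Z'; lra. }
    specialize (H1 i j Hb). fold m in H1.
    assert (INR i + al * INR j = m) by nra.
    specialize (H2 i j Hb H0). apply le_INR in H2.
    apply Rmult_le_pos; lra. }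
  assert (sum_f_R0 (fun k => lam k * (px k - INR qi)) N = x - INR qi).
  { assert (E2 : forall M, sum_f_R0 (fun k => lam k * (px k - INR qi)) M =
      sum_f_R0 (fun k => lam k * px k) M - INR qi * sum_f_R0 lam M)
      by (induction M; simpl; [ring| rewrite IHM; ring]).
    rewrite E2, Hs, Hx; ring. }
  lra.
Qed.

Lemma Q_vertex (b : nat -> nat -> C) al qi qj : 0 < al -> b qi qj <> 0%C ->
  (forall i j, b i j <> 0%C -> INR qi + al * INR qj <= INR i + al * INR j) ->
  (forall i j, b i j <> 0%C -> INR i + al * INR j = INR qi + al * INR qj -> (qi <= i)%nat) ->
  is_vertex b (INR qi) (INR qj).
Proof.
  intros Hal Hb H1 H2. split.
  - exists 1%nat, (fun _ => 1), (fun _ => INR qi), (fun _ => INR qj).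
    repeat split; simpl; try ring; try lia; try lra.
    exists qi, qj; repeat split; auto; lra.
  - intros x1 y1 x2 y2 N1 N2 Ex Ey.
    assert (H1' : forall i j, b i j <> 0%C -> INR qi + al * INR qj <= 1 * INR i + al * INR j)
      by (intros; rewrite Rmult_1_l; auto).
    assert (L1 := np_lin b _ 1 al ltac:(lra) ltac:(lra) H1' _ _ N1).
    assert (L2 := np_lin b _ 1 al ltac:(lra) ltac:(lra) H1' _ _ N2).
    assert (E1 : x1 + al * y1 = INR qi + al * INR qj) by nra.
    assert (E2 : x2 + al * y2 = INR qi + al * INR qj) by nra.
    assert (X1 := np_eq b al qi qj Hal H1 H2 _ _ N1 E1).
    assert (X2 := np_eq b al qi qj Hal H1 H2 _ _ N2 E2).
    assert (x1 = x2) by lra. subst x2.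
    split; auto. assert (al * y1 = al * y2) by lra.
    apply Rmult_eq_reg_l in H; lra.
Qed.

Lemma conv_shift (b : nat -> nat -> C) qi qj xv yv mu h1 h2 : b qi qj <> 0%C ->
  newton_polygon b xv yv -> 0 <= mu <= 1 -> 0 <= h1 -> 0 <= h2 ->
  newton_polygon b (mu * INR qi + (1-mu)*xv + h1) (mu * INR qj + (1-mu)*yv + h2).
Proof.
  intros Hb [n [lam [px [py [Hk [Hs [Hn [Hx Hy]]]]]]]] Hmu H1 H2.
  destruct n as [|m]; [lia|]. simpl in Hs, Hx, Hy.
  exists (S (S m)), (fun k => if (k <? S m)%nat then (1-mu)*lam k else mu),
    (fun k => if (k <? S m)%nat then px k + h1 else INR qi + h1),
    (fun k => if (k <? S m)%nat then py k + h2 else INR qj + h2).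
  split; [|split; [|split; [lia|split]]].
  - intros k Hk'. destruct (k <? S m)%nat eqn:E.
    + apply Nat.ltb_lt in E. destruct (Hk k E) as [Hl [i [j [Hb' [Hi Hj]]]]].
      split; [apply Rmult_le_pos; lra|]. exists i, j; repeat split; auto; lra.
    + split; [lra|]. exists qi, qj; repeat split; auto; lra.
  - simpl pred. simpl sum_f_R0 at 1. rewrite Nat.ltb_irrefl.
    rewrite (sum_eq _ (fun k => (1-mu) * lam k)).
    2:{ intros i Hi. replace (i <? S m)%nat with true; auto. symmetry; apply Nat.ltb_lt; lia. }
    rewrite sum_scal, Hs. ring.
  - simpl pred. simpl sum_f_R0 at 1. rewrite Nat.ltb_irrefl.
    rewrite (sum_eq _ (fun k => (1-mu) * (lam k * px k) + ((1-mu)*h1) * lam k)).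
    2:{ intros i Hi. replace (i <? S m)%nat with true; [ring|]. symmetry; apply Nat.ltb_lt; lia. }
    rewrite sum_lin2, Hs, <- Hx. ring.
  - simpl pred. simpl sum_f_R0 at 1. rewrite Nat.ltb_irrefl.
    rewrite (sum_eq _ (fun k => (1-mu) * (lam k * py k) + ((1-mu)*h2) * lam k)).
    2:{ intros i Hi. replace (i <? S m)%nat with true; [ring|]. symmetry; apply Nat.ltb_lt; lia. }
    rewrite sum_lin2, Hs, <- Hy. ring.
Qed.

Lemma nva (b : nat -> nat -> C) qi qj xv yv mu X Y : b qi qj <> 0%C ->
  newton_polygon b xv yv -> 0 <= mu <= 1 ->
  X = mu * INR qi + (1-mu) * xv -> mu * INR qj + (1-mu) * yv < Y -> ~ is_vertex b X Y.
Proof.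
  intros Hb HV Hmu HX HY [_ Hext].
  set (h := Y - (mu * INR qj + (1-mu) * yv)).
  assert (A1 := conv_shift b qi qj xv yv mu 0 0 Hb HV Hmu ltac:(lra) ltac:(lra)).
  assert (A2 := conv_shift b qi qj xv yv mu 0 (2*h) Hb HV Hmu ltac:(lra) ltac:(unfold h; lra)).
  destruct (Hext _ _ _ _ A1 A2) as [_ E]; [rewrite HX; field|unfold h; field|].
  unfold h in E. lra.
Qed.

Lemma D_pos (g D : R) : 0 <= g -> 0 < g / D -> 0 < D.
Proof.
  intros Hg H. destruct (Rtotal_order D 0) as [Hd|[Hd|Hd]]; auto.
  - exfalso. assert (/ D < 0) by (apply Rinv_lt_0_compat; auto).
    unfold Rdiv in H. nra.
  - subst. unfold Rdiv in H. rewrite Rinv_0, Rmult_0_r in H. lra.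
Qed.

Lemma key (b : nat -> nat -> C) delta gamma d : case4_vertex b delta gamma d ->
  0 < INR gamma / (INR delta - INR d) ->
  forall i j, b i j <> 0%C ->
  INR gamma + (INR gamma / (INR delta - INR d)) * INR d <=
    INR i + (INR gamma / (INR delta - INR d)) * INR j.
Proof.
  intros [HV [x0 [y0 [x2 [y2 [HL [Hx0 [HnoL [HR [Hx2 [HnoR [HT1 HT2]]]]]]]]]]]] Hal.
  set (D := INR delta - INR d) in *.
  set (al := INR gamma / D) in *.
  set (g := INR gamma) in *. set (dd := INR d) in *.
  assert (HD : 0 < D) by (apply D_pos with g; [apply pos_INR|auto]).
  assert (Hg : g = al * D) by (unfold al; field; lra).
  assert (fL : g + al * dd <= x0 + al * y0).
  { unfold y_intercept in HT2. fold g dd in HT2.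
    assert (r : x0 * (dd - y0) / (g - x0) * (g - x0) = x0 * (dd - y0)) by (field; lra).
    assert (INR delta * (g - x0) <= (y0 - x0 * (dd - y0) / (g - x0)) * (g - x0))
      by (apply Rmult_le_compat_r; lra).
    assert (H2 : g * y0 + x0 * D >= g * INR delta) by (unfold D; nra).
    rewrite Hg in H2. unfold D in *. nra. }
  assert (fR : g + al * dd <= x2 + al * y2).
  { unfold y_intercept in HT1. fold g dd in HT1.
    assert (r : g * (y2 - dd) / (x2 - g) * (x2 - g) = g * (y2 - dd)) by (field; lra).
    assert ((dd - g * (y2 - dd) / (x2 - g)) * (x2 - g) <= INR delta * (x2 - g))
      by (apply Rmult_le_compat_r; lra).
    assert (H2 : x2 * D + g * y2 >= g * INR delta) by (unfold D; nra).
    rewrite Hg in H2. unfold D in *. nra. }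
  intros i j Hb.
  destruct (Rle_lt_dec (g + al * dd) (INR i + al * INR j)) as [|Hlt]; auto.
  exfalso.
  destruct (lexmin b al Hal ltac:(exists i, j; auto)) as [qi [qj [Hq [H1 H2]]]].
  assert (HQ : INR qi + al * INR qj < g + al * dd) by (specialize (H1 i j Hb); lra).
  assert (QV := Q_vertex b al qi qj Hal Hq H1 H2).
  assert (NV := proj1 HV).
  set (X := INR qi) in *. set (Y := INR qj) in *.
  destruct (Rtotal_order X x0) as [C1|[C1|C1]].
  -
    set (mu := (g - x0) / (g - X)).
    assert (Hm1 : 0 < mu) by (unfold mu; apply Rdiv_lt_0_compat; lra).
    assert (Hm2 : mu <= 1) by (unfold mu; apply Rmult_le_reg_r with (g - X); [lra|]; unfold Rdiv; rewrite Rmult_assoc, Rinv_l; lra).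
    assert (EX : x0 = mu * X + (1 - mu) * g) by (unfold mu; field; lra).
    apply (nva b qi qj g dd mu x0 y0 Hq NV ltac:(lra) EX); auto.
    assert (mu * (X + al * Y) < mu * (g + al * dd)) by (apply Rmult_lt_compat_l; auto).
    assert (al * (mu * Y + (1 - mu) * dd) < al * y0) by nra.
    apply Rmult_lt_reg_l in H0; auto.
  - apply (nva b qi qj g dd 1 x0 y0 Hq NV ltac:(lra)); [fold X; lra| |exact HL].
    assert (al * Y < al * y0) by lra. apply Rmult_lt_reg_l in H; fold Y; lra.
  - destruct (Rtotal_order X g) as [C2|[C2|C2]].
    + apply (HnoL X Y QV); auto.
    + apply (nva b qi qj g dd 1 g dd Hq NV ltac:(lra)); [fold X; lra| |exact HV].
      assert (al * Y < al * dd) by lra. apply Rmult_lt_reg_l in H; fold Y; lra.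
    + destruct (Rtotal_order X x2) as [C3|[C3|C3]].
      * apply (HnoR X Y QV); auto.
      * apply (nva b qi qj g dd 1 x2 y2 Hq NV ltac:(lra)); [fold X; lra| |exact HR].
        assert (al * Y < al * y2) by lra. apply Rmult_lt_reg_l in H; fold Y; lra.
      * set (mu := (x2 - g) / (X - g)).
        assert (Hm1 : 0 < mu) by (unfold mu; apply Rdiv_lt_0_compat; lra).
        assert (Hm2 : mu <= 1) by (unfold mu; apply Rmult_le_reg_r with (X - g); [lra|]; unfold Rdiv; rewrite Rmult_assoc, Rinv_l; lra).
        assert (EX : x2 = mu * X + (1 - mu) * g) by (unfold mu; field; lra).
        apply (nva b qi qj g dd mu x2 y2 Hq NV ltac:(lra) EX); auto.
        assert (mu * (X + al * Y) < mu * (g + al * dd)) by (apply Rmult_lt_compat_l; auto).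
        assert (al * (mu * Y + (1 - mu) * dd) < al * y2) by nra.
        apply Rmult_lt_reg_l in H0; auto.
Qed.

Lemma exs_Re (u : nat -> C) (v : nat -> R) :
  (forall n, Cmod (u n) <= v n) -> ex_series v -> ex_series (fun n => Re (u n)).
Proof.
  intros H Hv. apply (@ex_series_le R_AbsRing R_CompleteNormedModule _ v); auto. intros n.
  change (norm (Re (u n))) with (Rabs (Re (u n))).
  eapply Rle_trans; [apply re_le_Cmod|apply H].
Qed.

Lemma im_le_Cmod' (c : C) : Rabs (Im c) <= Cmod c.
Proof.
  destruct c as [x y]. unfold Cmod, Im; simpl.
  rewrite <- sqrt_Rsqr_abs. apply sqrt_le_1_alt. unfold Rsqr. nra.
Qed.

Lemma exs_Im (u : nat -> C) (v : nat -> R) :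
  (forall n, Cmod (u n) <= v n) -> ex_series v -> ex_series (fun n => Im (u n)).
Proof.
  intros H Hv. apply (@ex_series_le R_AbsRing R_CompleteNormedModule _ v); auto. intros n.
  change (norm (Im (u n))) with (Rabs (Im (u n))).
  eapply Rle_trans; [apply im_le_Cmod'|apply H].
Qed.

Lemma Series_ge0 (w : nat -> R) : (forall n, 0 <= w n) -> ex_series w -> 0 <= Series w.
Proof.
  intros H Hw.
  assert (E : Series (fun n => 0 * w n) = 0) by (rewrite Series_scal_l; ring).
  rewrite <- E. apply Series_le; auto. intros n; specialize (H n); split; lra.
Qed.

Lemma CS_bound (u : nat -> C) (v : nat -> R) :
  (forall n, Cmod (u n) <= v n) -> ex_series v -> Cmod (CSeries u) <= Series v.
Proof.
  intros H Hv.
  assert (HR := exs_Re u v H Hv). assert (HI := exs_Im u v H Hv).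
  set (A := Series (fun n => Re (u n))). set (B := Series (fun n => Im (u n))).
  assert (E : CSeries u = (A, B)) by reflexivity. rewrite E.
  set (m := Cmod (A, B)).
  assert (Hm0 : 0 <= m) by apply Cmod_ge_0.
  assert (Hm2 : m ^ 2 = A ^ 2 + B ^ 2) by (unfold m; rewrite Cmod2_alt; reflexivity).
  assert (Hv0 : forall n, 0 <= v n) by (intros n; eapply Rle_trans; [apply Cmod_ge_0|apply H]).
  destruct (Req_dec m 0) as [Hz|Hz].
  { rewrite Hz. apply Series_ge0; auto. }
  set (c := A / m). set (s := B / m).
  assert (Hmc : m = c * A + s * B).
  { unfold c, s. apply Rmult_eq_reg_l with m; auto. field_simplify; auto.
    all: try (simpl in Hm2; nra). }
  assert (Hcs : c ^ 2 + s ^ 2 = 1).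
  { unfold c, s. field_simplify; auto. rewrite <- Hm2. field. auto. }
  assert (Hlin : c * A + s * B = Series (fun n => c * Re (u n) + s * Im (u n))).
  { rewrite Series_plus.
    - rewrite !Series_scal_l. reflexivity.
    - apply (ex_series_scal_l c (fun n => Re (u n))) in HR. exact HR.
    - apply (ex_series_scal_l s (fun n => Im (u n))) in HI. exact HI. }
  rewrite Hmc, Hlin.
  assert (Hpt : forall n, c * Re (u n) + s * Im (u n) <= v n).
  { intros n. specialize (H n). set (x := Re (u n)) in *. set (y := Im (u n)) in *.
    assert (Hc2 := Cmod2_alt (u n)). fold x y in Hc2.
    assert (0 <= Cmod (u n)) by apply Cmod_ge_0.
    assert (c * x + s * y <= Cmod (u n)).
    { destruct (Rle_lt_dec (c * x + s * y) 0); [lra|].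
      apply Rsqr_incr_0_var; [|apply Cmod_ge_0]. unfold Rsqr.
      assert (0 <= (c * y - s * x) ^ 2) by apply pow2_ge_0.
      simpl in Hc2, Hcs. nra. }
    lra. }
  assert (Ed : Series v - Series (fun n => c * Re (u n) + s * Im (u n)) =
     Series (fun n => v n - (c * Re (u n) + s * Im (u n)))).
  { rewrite Series_minus; auto.
    apply (ex_series_plus (fun n => c * Re (u n)) (fun n => s * Im (u n))).
    - apply (ex_series_scal_l c (fun n => Re (u n))) in HR. exact HR.
    - apply (ex_series_scal_l s (fun n => Im (u n))) in HI. exact HI. }
  assert (0 <= Series (fun n => v n - (c * Re (u n) + s * Im (u n)))).
  { apply Series_ge0. intros n; specialize (Hpt n); lra.
    apply (ex_series_minus v (fun n => c * Re (u n) + s * Im (u n))); auto.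
    apply (ex_series_plus (fun n => c * Re (u n)) (fun n => s * Im (u n))).
    - apply (ex_series_scal_l c (fun n => Re (u n))) in HR. exact HR.
    - apply (ex_series_scal_l s (fun n => Im (u n))) in HI. exact HI. }
  lra.
Qed.

Lemma exp_le' x y : x <= y -> exp x <= exp y.
Proof. intros [H|H]; [left; apply exp_increasing; auto|subst; lra]. Qed.

Lemma Rpower_le_dec x e1 e2 : 0 < x <= 1 -> e1 <= e2 -> Rpower x e2 <= Rpower x e1.
Proof.
  intros [H0 H1] He. unfold Rpower. apply exp_le'.
  assert (ln x <= 0) by (rewrite <- ln_1; apply ln_le; lra). nra.
Qed.

Lemma Rpower_1_base e : Rpower 1 e = 1.
Proof. unfold Rpower. rewrite ln_1, Rmult_0_r, exp_0. auto. Qed.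

Lemma Rpower_pos' x e : 0 < Rpower x e.
Proof. unfold Rpower. apply exp_pos. Qed.

Lemma pow_mono_dec x n m : 0 <= x <= 1 -> (n <= m)%nat -> x ^ m <= x ^ n.
Proof.
  intros Hx Hnm. replace m with (n + (m - n))%nat by lia. rewrite pow_add.
  rewrite <- (Rmult_1_r (x ^ n)) at 2. apply Rmult_le_compat_l.
  - apply pow_le; lra.
  - clear Hnm. induction (m - n)%nat; simpl; [lra|].
    replace 1 with (1 * 1) by ring. apply Rmult_le_compat; try lra. apply pow_le; lra.
Qed.

Lemma sumz (f : nat -> R) m : (forall k, (k <= m)%nat -> f k = 0) -> sum_f_R0 f m = 0.
Proof. induction m; intros H; simpl. - apply H; lia. - rewrite IHm, H; [ring|lia|intros; apply H; lia]. Qed.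

Lemma sum_prefix0 (f : nat -> R) n : (forall k, (k < n)%nat -> f k = 0) -> sum_f_R0 f n = f n.
Proof.
  destruct n; intros H; simpl; auto. rewrite sumz; [ring|]. intros; apply H; lia.
Qed.

Lemma p_est (a : nat -> C) (delta : nat) :
  (forall n, (n < delta)%nat -> a n = 0%C) -> conv1 a ->
  exists rho A, 0 < rho /\ 0 <= A /\ forall z : C, Cmod z <= rho ->
    Cmod (pval a z - a delta * Cpow z delta)%C <= (Cmod z / rho) ^ (S delta) * A.
Proof.
  intros Ha [rho [Hrho Hex]].
  set (A2 := fun k => Cmod (a (S delta + k)%nat) * rho ^ (S delta + k)).
  assert (HA2 : ex_series A2).
  { apply (@ex_series_incr_n R_AbsRing R_NormedModule (fun n => Cmod (a n) * rho ^ n) (S delta)). exact Hex. }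
  exists rho, (Series A2). split; auto. split.
  { apply Series_ge0; auto. intros; unfold A2. apply Rmult_le_pos; [apply Cmod_ge_0|apply pow_le; lra]. }
  intros z Hz.
  set (t := Cmod z).
  assert (Ht0 : 0 <= t) by apply Cmod_ge_0.
  set (u := fun n => (a n * Cpow z n)%C).
  assert (Hu : forall n, Cmod (u n) <= Cmod (a n) * rho ^ n).
  { intros n. unfold u. rewrite Cmod_mult, Cmod_pow. apply Rmult_le_compat_l; [apply Cmod_ge_0|].
    apply pow_incr; split; [apply Cmod_ge_0|auto]. }
  assert (HR := exs_Re u _ Hu Hex). assert (HI := exs_Im u _ Hu Hex).
  set (tl := fun k => u (S delta + k)%nat).
  assert (E : (pval a z - a delta * Cpow z delta)%C = CSeries tl).
  { change (pval a z) with ((Series (fun n => Re (u n)), Series (fun n => Im (u n)))).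
    change (CSeries tl) with ((Series (fun n => Re (tl n)), Series (fun n => Im (tl n)))).
    rewrite (Series_incr_n (fun n => Re (u n)) (S delta)); [|lia|auto].
    rewrite (Series_incr_n (fun n => Im (u n)) (S delta)); [|lia|auto].
    simpl pred. rewrite !sum_prefix0.
    2:{ intros k Hk. unfold u. rewrite Ha; auto. simpl. ring. }
    2:{ intros k Hk. unfold u. rewrite Ha; auto. simpl. ring. }
    fold (u delta). unfold tl. destruct (u delta) as [x y] eqn:Eu.
    unfold Cminus, Cplus, Copp. simpl. f_equal; ring. }
  rewrite E.
  set (c := (t / rho) ^ S delta).
  assert (Hc : 0 <= c) by (apply pow_le; apply Rdiv_le_0_compat; lra).
  replace (c * Series A2) with (Series (fun k => c * A2 k)) by apply Series_scal_l.
  apply CS_bound.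
  - intros k. unfold tl, u, A2, c. rewrite Cmod_mult, Cmod_pow. fold t.
    rewrite (Rmult_comm ((t / rho) ^ S delta)), Rmult_assoc. apply Rmult_le_compat_l; [apply Cmod_ge_0|].
    replace (t ^ (S delta + k)) with (rho ^ (S delta + k) * (t / rho) ^ (S delta + k)).
    2:{ rewrite <- Rpow_mult_distr. f_equal. field. lra. }
    apply Rmult_le_compat_l; [apply pow_le; lra|].
    apply pow_mono_dec; [split; [apply Rdiv_le_0_compat; [apply Cmod_ge_0|lra]|]|lia].
    apply Rmult_le_reg_r with rho; auto. unfold Rdiv. rewrite Rmult_assoc, Rinv_l; [unfold t; lra|lra].
  - apply (@ex_series_scal_l R_AbsRing R_NormedModule c A2). auto.
Qed.

Lemma q_est (b : nat -> nat -> C) (rho : R) :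
  (forall i, ex_series (fun j => Cmod (b i j) * rho ^ i * rho ^ j)) ->
  ex_series (fun i => Series (fun j => Cmod (b i j) * rho ^ i * rho ^ j)) ->
  forall (z w : C) (Th : R), 0 <= Th ->
  (forall i j, Cmod (b i j * Cpow z i * Cpow w j)%C <= Th * (Cmod (b i j) * rho ^ i * rho ^ j)) ->
  Cmod (qval b z w) <= Th * Series (fun i => Series (fun j => Cmod (b i j) * rho ^ i * rho ^ j)).
Proof.
  intros H1 H2 z w Th HTh H.
  unfold qval. rewrite <- Series_scal_l. apply CS_bound.
  - intros i. rewrite <- Series_scal_l. apply CS_bound; auto.
    apply (@ex_series_scal_l R_AbsRing R_NormedModule Th). auto.
  - apply (@ex_series_scal_l R_AbsRing R_NormedModule Th (fun i => Series (fun j => Cmod (b i j) * rho ^ i * rho ^ j))). auto.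
Qed.

Lemma Cmod_sub_sym (x y : C) : Cmod (x - y)%C = Cmod (y - x)%C.
Proof. replace (y - x)%C with (- (x - y))%C by ring. rewrite Cmod_opp. auto. Qed.

Theorem theorem2p13
  (a : nat -> C) (delta : nat) (b : nat -> nat -> C) (gamma d : nat) :
  (2 <= delta)%nat ->
  (forall n, (n < delta)%nat -> a n = 0%C) ->
  a delta <> 0%C ->
  conv1 a ->
  conv2 b ->
  b 0%nat 0%nat = 0%C ->
  b 0%nat 1%nat = 0%C ->
  case4_vertex b delta gamma d ->
  let alpha := INR gamma / (INR delta - INR d) in
  forall l : R, 0 < l -> l < alpha ->
  forall eps : R, 0 < eps ->
  exists r1 r2 : R, 0 < r1 < eps /\ 0 < r2 < eps /\
    forall z w : C, U_plus l r1 r2 z w ->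
      U_plus l r1 r2 (pval a z) (qval b z w).
Proof.
  intros Hd2 Ha0 Had Hc1 Hc2 Hb00 Hb01 H4 alpha l Hl Hla eps Heps.
  assert (Hal : 0 < alpha) by lra.
  assert (HK : forall i j, b i j <> 0%C -> alpha * (INR delta - INR j) <= INR i).
  { intros i j Hb. assert (K := key b delta gamma d H4 Hal i j Hb). fold alpha in K.
    assert (HD : 0 < INR delta - INR d) by (apply D_pos with (INR gamma); [apply pos_INR|auto]).
    assert (alpha * (INR delta - INR d) = INR gamma) by (unfold alpha; field; lra).
    nra. }
  clearbody alpha.
  destruct (p_est a delta Ha0 Hc1) as [rA [A [HrA [HA Hp]]]].
  destruct Hc2 as [rho [Hrho [Hin Hout]]].
  set (SS := Series (fun i => Series (fun j => Cmod (b i j) * rho ^ i * rho ^ j))).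
  assert (HS : 0 <= SS).
  { apply Series_ge0; auto. intros i. apply Series_ge0; auto. intros j.
    apply Rmult_le_pos; [apply Rmult_le_pos; [apply Cmod_ge_0|]|]; apply pow_le; lra. }
  set (c0 := Cmod (a delta)).
  assert (Hc0 : 0 < c0) by (apply Cmod_gt_0; auto).
  set (cl := Rpower (c0 / 2) l).
  assert (Hcl : 0 < cl) by apply Rpower_pos'.
  set (Dl := INR delta).
  assert (HDl : 2 <= Dl) by (unfold Dl; replace 2 with (INR 2) by (simpl; ring); apply le_INR; auto).
  set (r2 := Rmin (eps/2) (Rmin rho (Rmin 1 (Rmin (Rpower rho (1-l)) (cl * rho ^ delta / (2*SS+1)))))).
  assert (Hr2p : 0 < r2).
  { unfold r2. repeat apply Rmin_case; try lra; try apply Rpower_pos'.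
    apply Rdiv_lt_0_compat; [apply Rmult_lt_0_compat; [auto|apply pow_lt; auto]|lra]. }
  assert (Hr2e : r2 <= eps/2) by apply Rmin_l.
  assert (Hr2r : r2 <= rho) by (eapply Rle_trans; [apply Rmin_r|apply Rmin_l]).
  assert (Hr21 : r2 <= 1) by (eapply Rle_trans; [apply Rmin_r|]; eapply Rle_trans; [apply Rmin_r|apply Rmin_l]).
  assert (Hr2q : r2 <= Rpower rho (1-l)).
  { eapply Rle_trans; [apply Rmin_r|]; eapply Rle_trans; [apply Rmin_r|]; eapply Rle_trans; [apply Rmin_r|apply Rmin_l]. }
  assert (Hr2S : r2 <= cl * rho ^ delta / (2*SS+1)).
  { eapply Rle_trans; [apply Rmin_r|]; eapply Rle_trans; [apply Rmin_r|]; eapply Rle_trans; [apply Rmin_r|apply Rmin_r]. }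
  set (kap := r2 * cl * Rpower rho (l * Dl) / (2*SS+2)).
  assert (Hkap_def : kap = r2 * cl * Rpower rho (l * Dl) / (2*SS+2)) by reflexivity.
  assert (Hkap : 0 < kap).
  { unfold kap. apply Rdiv_lt_0_compat; [|lra].
    apply Rmult_lt_0_compat; [apply Rmult_lt_0_compat; auto|apply Rpower_pos']. }
  set (r1 := Rmin (eps/2) (Rmin rA (Rmin rho (Rmin 1 (Rmin (c0 * rA ^ (S delta) / (2*A+1))
              (Rmin (/(2*c0)) (rho * Rpower kap (/(alpha - l))))))))).
  assert (Hr1p : 0 < r1).
  { unfold r1. repeat apply Rmin_case; try lra.
    - apply Rdiv_lt_0_compat; [apply Rmult_lt_0_compat; [auto|apply pow_lt; auto]|lra].
    - apply Rinv_0_lt_compat; lra.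
    - apply Rmult_lt_0_compat; [auto|apply Rpower_pos']. }
  assert (Hr1e : r1 <= eps/2) by apply Rmin_l.
  assert (Hr1a : r1 <= rA) by (eapply Rle_trans; [apply Rmin_r|apply Rmin_l]).
  assert (Hr1r : r1 <= rho) by (eapply Rle_trans; [apply Rmin_r|]; eapply Rle_trans; [apply Rmin_r|apply Rmin_l]).
  assert (Hr11 : r1 <= 1).
  { eapply Rle_trans; [apply Rmin_r|]; eapply Rle_trans; [apply Rmin_r|]; eapply Rle_trans; [apply Rmin_r|apply Rmin_l]. }
  assert (Hr1A : r1 <= c0 * rA ^ (S delta) / (2*A+1)).
  { do 4 (eapply Rle_trans; [apply Rmin_r|]). apply Rmin_l. }
  assert (Hr1c : r1 <= /(2*c0)).
  { do 5 (eapply Rle_trans; [apply Rmin_r|]). apply Rmin_l. }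
  assert (Hr1k : r1 <= rho * Rpower kap (/(alpha - l))).
  { do 5 (eapply Rle_trans; [apply Rmin_r|]). apply Rmin_r. }
  clearbody r1 r2 kap.
  exists r1, r2. split; [lra|]. split; [lra|].
  intros z w [Hz Hw].
  set (t := Cmod z) in *. set (s := Cmod w) in *.
  assert (Ht0 : 0 <= t) by apply Cmod_ge_0.
  assert (Hs0 : 0 <= s) by apply Cmod_ge_0.
  assert (Htp : 0 < t).
  { destruct (Req_dec t 0) as [E|E]; [|lra]. unfold rpow in Hw.
    destruct (Req_EM_T t 0); [lra|contradiction]. }
  assert (Hu : rpow t l = Rpower t l) by (unfold rpow; destruct (Req_EM_T t 0); [lra|auto]).
  rewrite Hu in Hw. set (u := Rpower t l) in *.
  assert (Hup : 0 < u) by apply Rpower_pos'.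
  assert (Hu1 : u <= 1).
  { unfold u. rewrite <- (Rpower_1_base l). apply Rle_Rpower_l; lra. }
  assert (Hpe := Hp z ltac:(fold t; lra)). fold t in Hpe.
  set (P := pval a z) in *.
  assert (Hmain : Cmod (a delta * Cpow z delta)%C = c0 * t ^ delta)
    by (rewrite Cmod_mult, Cmod_pow; auto).
  set (RA := rA ^ S delta).
  assert (HRA : 0 < RA) by (apply pow_lt; auto).
  assert (Htd0 : 0 < t ^ delta) by (apply pow_lt; auto).
  assert (Herr : (t / rA) ^ S delta * A <= c0 / 2 * t ^ delta).
  { assert (E : (t / rA) ^ S delta * A = t ^ delta * (t * A) / RA).
    { unfold RA, Rdiv. rewrite Rpow_mult_distr, pow_inv. simpl. field. split; [apply pow_nonzero|]; lra. }
    rewrite E.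
    assert (H1 : t * (2*A+1) <= c0 * RA).
    { replace (c0 * RA) with (c0 * RA / (2*A+1) * (2*A+1)) by (field; lra).
      apply Rmult_le_compat_r; [lra|]. fold RA in Hr1A. lra. }
    assert (H2 : t * A <= c0 / 2 * RA) by nra.
    apply Rmult_le_reg_r with RA; auto. unfold Rdiv. rewrite Rmult_assoc, Rinv_l; [|lra].
    rewrite Rmult_1_r. nra. }
  assert (Hpt : Cmod (P - a delta * Cpow z delta)%C <= c0 / 2 * t ^ delta) by lra.
  assert (HPlo : c0 / 2 * t ^ delta <= Cmod P).
  { assert (Cmod (a delta * Cpow z delta)%C <= Cmod P + Cmod (a delta * Cpow z delta - P)%C).
    { replace (a delta * Cpow z delta)%C with (P + (a delta * Cpow z delta - P))%C at 1 by ring.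
      apply Cmod_triangle. }
    rewrite Cmod_sub_sym in H. lra. }
  assert (HPhi : Cmod P <= c0 * t ^ delta + c0 / 2 * t ^ delta).
  { replace P with (a delta * Cpow z delta + (P - a delta * Cpow z delta))%C by ring.
    eapply Rle_trans; [apply Cmod_triangle|]. lra. }
  assert (Htd : t ^ delta <= t ^ 2) by (apply pow_mono_dec; [lra|auto]).
  assert (HPp : 0 < Cmod P) by nra.
  split.
  {
    assert (c0 * t <= 1/2).
    { assert (c0 * r1 <= c0 * / (2 * c0)) by (apply Rmult_le_compat_l; lra).
      replace (c0 * / (2 * c0)) with (1/2) in H by (field; lra). nra. }
    simpl in Htd. nra. }
  assert (HrP : rpow (Cmod P) l = Rpower (Cmod P) l)
    by (unfold rpow; destruct (Req_EM_T (Cmod P) 0); [lra|auto]).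
  rewrite HrP.
  set (W := Rpower t (l * Dl)).
  assert (HW : 0 < W) by apply Rpower_pos'.
  assert (HPW : cl * W <= Rpower (Cmod P) l).
  { assert (E : W = Rpower (t ^ delta) l).
    { rewrite <- (Rpower_pow delta t) by auto. rewrite Rpower_mult. fold Dl. unfold W. f_equal; ring. }
    unfold cl. rewrite E, Rpower_mult_distr; [|lra|auto].
    apply Rle_Rpower_l; [lra|]. split; [apply Rmult_lt_0_compat; lra|lra]. }
  set (tau := t / rho). set (sig := s / rho).
  assert (Htau : 0 < tau) by (unfold tau; apply Rdiv_lt_0_compat; lra).
  assert (Htau1 : tau <= 1).
  { unfold tau. apply Rmult_le_reg_r with rho; auto. unfold Rdiv. rewrite Rmult_assoc, Rinv_l; lra. }
  assert (Htaur : tau <= r1 / rho) by (unfold tau; apply Rmult_le_compat_r; [left; apply Rinv_0_lt_compat; auto|lra]).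
  assert (Hsig0 : 0 <= sig) by (unfold sig; apply Rdiv_le_0_compat; lra).
  assert (Hsigu : sig <= r2 * u / rho) by (unfold sig; apply Rmult_le_compat_r; [left; apply Rinv_0_lt_compat; auto|lra]).
  assert (Hru : r2 * u / rho <= Rpower tau l).
  { assert (Eu : u = Rpower rho l * Rpower tau l).
    { unfold u. rewrite Rpower_mult_distr; auto. f_equal. unfold tau. field. lra. }
    assert (Hr : r2 * Rpower rho l <= rho).
    { replace rho with (Rpower rho (1 - l) * Rpower rho l) at 2.
      - apply Rmult_le_compat_r; [left; apply Rpower_pos'|auto].
      - rewrite <- Rpower_plus. replace (1 - l + l) with 1 by ring. apply Rpower_1; auto. }
    rewrite Eu. apply Rmult_le_reg_r with rho; auto. unfold Rdiv.
    rewrite Rmult_assoc, Rinv_l; [|lra].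
    assert (0 < Rpower tau l) by apply Rpower_pos'. nra. }
  assert (Hsig1 : sig <= 1).
  { assert (r2 * u <= rho) by nra.
    apply Rle_trans with (r2 * u / rho); auto.
    apply Rmult_le_reg_r with rho; auto. unfold Rdiv. rewrite Rmult_assoc, Rinv_l; lra. }
  set (Th := (r2 * u / rho) ^ delta + Rpower tau (l * Dl + (alpha - l))).
  assert (HTh1 : 0 <= (r2 * u / rho) ^ delta) by (apply pow_le; apply Rdiv_le_0_compat; nra).
  assert (HTh2 : 0 < Rpower tau (l * Dl + (alpha - l))) by apply Rpower_pos'.
  assert (Hterm : forall i j, b i j <> 0%C -> tau ^ i * sig ^ j <= Th).
  { intros i j Hb. destruct (le_lt_dec delta j) as [Hj|Hj].
    - assert (tau ^ i <= 1) by (apply (pow_mono_dec tau 0 i); [lra|lia]).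
      assert (sig ^ j <= sig ^ delta) by (apply pow_mono_dec; [lra|auto]).
      assert (sig ^ delta <= (r2 * u / rho) ^ delta) by (apply pow_incr; lra).
      assert (0 <= sig ^ j) by (apply pow_le; lra).
      assert (0 <= tau ^ i) by (apply pow_le; lra).
      unfold Th. nra.
    - assert (HKij := HK i j Hb).
      assert (Hj1 : INR j + 1 <= Dl) by (unfold Dl; rewrite <- S_INR; apply le_INR; lia).
      assert (T1 : tau ^ i <= Rpower tau (alpha * (Dl - INR j))).
      { rewrite <- Rpower_pow; auto. apply Rpower_le_dec; [lra|auto]. }
      assert (T2 : sig ^ j <= Rpower tau (l * INR j)).
      { rewrite <- Rpower_mult, Rpower_pow; [|apply Rpower_pos'].
        apply pow_incr; lra. }
      assert (T3 : tau ^ i * sig ^ j <= Rpower tau (alpha * (Dl - INR j)) * Rpower tau (l * INR j)).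
      { apply Rmult_le_compat; auto; apply pow_le; lra. }
      rewrite <- Rpower_plus in T3.
      assert (T4 : Rpower tau (alpha * (Dl - INR j) + l * INR j) <= Rpower tau (l * Dl + (alpha - l))).
      { apply Rpower_le_dec; [lra|]. nra. }
      unfold Th. lra. }
  assert (HQ : Cmod (qval b z w) <= Th * SS).
  { apply q_est; auto. { unfold Th; lra. }
    intros i j. rewrite !Cmod_mult, !Cmod_pow. fold t s.
    assert (Et : t ^ i = rho ^ i * tau ^ i) by (rewrite <- Rpow_mult_distr; f_equal; unfold tau; field; lra).
    assert (Es : s ^ j = rho ^ j * sig ^ j) by (rewrite <- Rpow_mult_distr; f_equal; unfold sig; field; lra).
    rewrite Et, Es.
    assert (0 <= rho ^ i) by (apply pow_le; lra).
    assert (0 <= rho ^ j) by (apply pow_le; lra).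
    assert (0 <= tau ^ i) by (apply pow_le; lra).
    assert (0 <= sig ^ j) by (apply pow_le; lra).
    destruct (classic (b i j = 0%C)) as [Hb|Hb].
    - rewrite Hb, Cmod_0. lra.
    - specialize (Hterm i j Hb).
      assert (0 <= Cmod (b i j)) by apply Cmod_ge_0.
      set (K := Cmod (b i j) * rho ^ i * rho ^ j).
      assert (0 <= K) by (unfold K; repeat apply Rmult_le_pos; auto).
      replace (Cmod (b i j) * (rho ^ i * tau ^ i) * (rho ^ j * sig ^ j)) with (K * (tau ^ i * sig ^ j))
        by (unfold K; ring).
      rewrite (Rmult_comm Th). apply Rmult_le_compat_l; auto. }
  assert (F1 : (r2 * u / rho) ^ delta * SS <= r2 * cl * W / 2).
  { assert (Eu : (r2 * u / rho) ^ delta = r2 ^ delta * W / rho ^ delta).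
    { unfold Rdiv. rewrite !Rpow_mult_distr, pow_inv. unfold W, u.
      rewrite <- (Rpower_pow delta (Rpower t l)); [|apply Rpower_pos']. rewrite Rpower_mult. fold Dl. ring. }
    rewrite Eu.
    assert (Hrd : r2 ^ delta <= r2 ^ 2) by (apply pow_mono_dec; [lra|auto]).
    assert (H1 : SS * (2*SS+1) * r2 <= SS * (cl * rho ^ delta)).
    { replace (SS * (cl * rho ^ delta)) with (SS * (cl * rho ^ delta / (2*SS+1) * (2*SS+1))) by (field; lra).
      assert (r2 * (2*SS+1) <= cl * rho ^ delta / (2*SS+1) * (2*SS+1)) by (apply Rmult_le_compat_r; lra).
      nra. }
    assert (H2 : SS * r2 <= cl * rho ^ delta / 2).
    { assert (0 < rho ^ delta) by (apply pow_lt; auto). nra. }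
    assert (Hrhd : 0 < rho ^ delta) by (apply pow_lt; auto).
    apply Rmult_le_reg_r with (rho ^ delta); auto.
    replace (r2 ^ delta * W / rho ^ delta * SS * rho ^ delta) with (r2 ^ delta * W * SS) by (field; lra).
    simpl in Hrd.
    assert (r2 ^ delta * SS <= r2 * (r2 * SS)) by nra.
    assert (r2 * (r2 * SS) <= r2 * (cl * rho ^ delta / 2)) by (apply Rmult_le_compat_l; lra).
    nra. }
  assert (F2 : Rpower tau (l * Dl + (alpha - l)) * SS < r2 * cl * W / 2).
  { rewrite Rpower_plus.
    set (Rr := Rpower rho (l * Dl)). set (T1 := Rpower tau (l * Dl)).
    assert (HRr : 0 < Rr) by apply Rpower_pos'. assert (HT1 : 0 < T1) by apply Rpower_pos'.
    assert (EW : T1 * Rr = W).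
    { unfold T1, Rr, W. rewrite Rpower_mult_distr; auto. f_equal. unfold tau. field. lra. }
    assert (Hk : Rpower tau (alpha - l) <= kap).
    { apply Rle_trans with (Rpower (r1 / rho) (alpha - l)).
      { apply Rle_Rpower_l; lra. }
      apply Rle_trans with (Rpower (Rpower kap (/ (alpha - l))) (alpha - l)).
      { apply Rle_Rpower_l; [lra|]. split; [apply Rdiv_lt_0_compat; auto|].
        apply Rmult_le_reg_r with rho; auto. unfold Rdiv. rewrite Rmult_assoc, Rinv_l; lra. }
      rewrite Rpower_mult. replace (/ (alpha - l) * (alpha - l)) with 1 by (field; lra).
      rewrite Rpower_1; lra. }
    assert (Ek : kap * (2 * SS + 2) = r2 * cl * Rr) by (unfold Rr; rewrite Hkap_def; field; lra).
    assert (0 < Rpower tau (alpha - l)) by apply Rpower_pos'.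
    assert (SS * kap < r2 * cl * Rr / 2) by nra.
    rewrite <- EW.
    assert (T1 * Rpower tau (alpha - l) * SS <= T1 * kap * SS).
    { apply Rmult_le_compat_r; auto. apply Rmult_le_compat_l; lra. }
    nra. }
  assert (Th * SS < r2 * cl * W) by (unfold Th; lra).
  assert (r2 * cl * W <= r2 * Rpower (Cmod P) l) by (rewrite Rmult_assoc; apply Rmult_le_compat_l; lra).
  lra.
Qed.
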